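(* Let $A\in\mathbb{C}^{n\times n}$ be Hermitian positive semi-definite with eigenvalue decomposition $A=U\Lambda U^*$, $U$ unitary, $\Lambda=\mathrm{diag}(\lambda_1,\dots,\lambda_n)$, $\lambda_1\ge\cdots\ge\lambda_n$, and let $k$ satisfy $\lambda_k>\lambda_{k+1}>0$. Partition $U=(U_1,U_2)$ with $U_1\in\mathbb{C}^{n\times k}$ and let $\Lambda_2=\mathrm{diag}(\lambda_{k+1},\dots,\lambda_n)$. Let $q\ge1$, $k\le l\le n$, and let $\Omega\in\mathbb{C}^{n\times l}$ be any matrix such that $\widehat\Omega_1=U_1^*\Omega\in\mathbb{C}^{k\times l}$ has rank $k$ and $K_q=(A\Omega,A^2\Omega,\dots,A^q\Omega)$ has full column rank $ql$. Let $\widehat\Omega_2=U_2^*\Omega$, let $K_q=Q_qR_q$ be the thin QR factorization and $T=Q_q^*AQ_q$. Then $$0\le\mathrm{Tr}(A)-\mathrm{Tr}(T)\le\left(1+T_{q-1}^{-1}\!\left(\frac{2\lambda_k-\lambda_{k+1}}{\lambda_{k+1}}\right)\|\widehat\Omega_2\widehat\Omega_1^\dagger\|_2\right)\mathrm{Tr}(\Lambda_2).$$ Moreover, when $0<\|\widehat\Omega_2\widehat\Omega_1^\dagger\|_2\le\frac{\lambda_k}{\lambda_{k+1}}T_{q-1}\!\left(\frac{2\lambda_k-\lambda_{k+1}}{\lambda_{k+1}}\right)$, the following (tighter) bound holds: $$0\le\mathrm{Tr}(A)-\mathrm{Tr}(T)\le\left(1+\frac{\lambda_{k+1}}{\lam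bda_k}T_{q-1}^{-2}\!\left(\frac{2\lambda_k-\lambda_{k+1}}{\lambda_{k+1}}\right)\|\widehat\Omega_2\widehat\Omega_1^\dagger\|_2^2\right)\mathrm{Tr}(\Lambda_2).$$
   Context: $X^\dagger$ denotes the Moore–Penrose inverse and $\|\cdot\|_2$ the spectral norm. $T_m$ is the Chebyshev polynomial of the first kind of degree $m$; for $x\ge1$, $T_m(x)=\frac{(x+\sqrt{x^2-1})^m+(x-\sqrt{x^2-1})^m}{2}$; $T_m^{-1}(x)=1/T_m(x)$ and $T_m^{-2}(x)=1/T_m(x)^2$. *)

(* Defs.v *)
From HB Require Import structures.
From mathcomp Require Import all_boot all_order all_algebra.
From mathcomp Require Import complex.
From mathcomp Require Import boolp classical_sets reals.
Set Implicit Arguments. Unset Strict Implicit. Unset Printing Implicit Defensive.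
Import Order.TTheory GRing.Theory Num.Theory.
Local Open Scope ring_scope.

Definition ctrmx (R : realType) (m n : nat) (X : 'M[R[i]]_(m, n)) : 'M[R[i]]_(n, m) :=
  (map_mx Num.conj X)^T.

Definition vnorm2 (R : realType) (n : nat) (v : 'cV[R[i]]_n) : R :=
  Num.sqrt (complex.Re (\sum_(i < n) `|v i 0| ^+ 2)).

Definition specnorm (R : realType) (m n : nat) (X : 'M[R[i]]_(m, n)) : R :=
  sup [set vnorm2 (X *m v) | v in [set v : 'cV[R[i]]_n | vnorm2 v = 1]].

Definition penrose (R : realType) (m n : nat) (X : 'M[R[i]]_(m, n)) (Y : 'M[R[i]]_(n, m)) :=
  [/\ X *m Y *m X = X, Y *m X *m Y = Y,
      ctrmx (X *m Y) = X *m Y & ctrmx (Y *m X) = Y *m X].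

Definition pinv (R : realType) (m n : nat) (X : 'M[R[i]]_(m, n)) : 'M[R[i]]_(n, m) :=
  xget 0 [set Y | penrose X Y].

Fixpoint cheb (R : realType) (m : nat) (x : R) : R :=
  match m with
  | 0 => 1
  | 1 => x
  | (p.+1 as p1).+1 => 2 * x * cheb p1 x - cheb p x
  end.

Definition upper_trig (R : realType) (m n : nat) (X : 'M[R[i]]_(m, n)) :=
  forall (i : 'I_m) (j : 'I_n), (j < i)%N -> X i j = 0.

Definition hermitian_psd (R : realType) (n : nat) (A : 'M[R[i]]_n) :=
  ctrmx A = A /\ forall v : 'cV[R[i]]_n, 0 <= (ctrmx v *m A *m v) 0 0.

(* diagonal matrix diag(lam 1, ..., lam n) with 1-based indexing of lam *)
Definition rdiag (R : realType) (n : nat) (lam : nat -> R) : 'M[R[i]]_n :=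
  \matrix_(i < n, j < n) ((i == j)%:R * real_complex R (lam i.+1)).

Definition krylov (R : realType) (n l q : nat) (A : 'M[R[i]]_n) (Om : 'M[R[i]]_(n, l))
  : 'M[R[i]]_(n, \sum_(j < q) l) :=
  \mxrow_(j < q) (A ^+ j.+1 *m Om).

(* Main.v *)
Require Import Defs.
From HB Require Import structures.
From mathcomp Require Import all_boot all_order all_algebra.
From mathcomp Require Import complex.
From mathcomp Require Import boolp classical_sets reals.
Import Order.TTheory GRing.Theory Num.Theory.
Local Open Scope ring_scope.
Set Implicit Arguments. Unset Strict Implicit. Unset Printing Implicit Defensive.
From mathcomp Require Import ring lra.
From mathcomp Require Import zify.
Section Ctr.
Variable R : realType.
Local Notation C := R[i].

Lemma ctrmxE m n (X : 'M[C]_(m,n)) i j : ctrmx X i j = (X j i)^*.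
Proof. by rewrite /ctrmx !mxE. Qed.

Lemma ctrmxK m n (X : 'M[C]_(m,n)) : ctrmx (ctrmx X) = X.
Proof. by apply/matrixP=> i j; rewrite !ctrmxE conjCK. Qed.

Lemma ctrmx_mul m n p (X : 'M[C]_(m,n)) (Y : 'M[C]_(n,p)) :
  ctrmx (X *m Y) = ctrmx Y *m ctrmx X.
Proof. by rewrite /ctrmx map_mxM trmx_mul. Qed.

Lemma ctrmxD m n (X Y : 'M[C]_(m,n)) : ctrmx (X + Y) = ctrmx X + ctrmx Y.
Proof. by apply/matrixP=> i j; rewrite /ctrmx !mxE rmorphD. Qed.

Lemma ctrmxN m n (X : 'M[C]_(m,n)) : ctrmx (- X) = - ctrmx X.
Proof. by apply/matrixP=> i j; rewrite /ctrmx !mxE rmorphN. Qed.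

Lemma ctrmxB m n (X Y : 'M[C]_(m,n)) : ctrmx (X - Y) = ctrmx X - ctrmx Y.
Proof. by rewrite ctrmxD ctrmxN. Qed.

Lemma ctrmx1 n : ctrmx (1%:M : 'M[C]_n) = 1%:M.
Proof. by apply/matrixP=> i j; rewrite /ctrmx !mxE eq_sym conjC_nat. Qed.

Lemma ctrmx0 m n : ctrmx (0 : 'M[C]_(m,n)) = 0.
Proof. by apply/matrixP=> i j; rewrite ctrmxE !mxE conjC0. Qed.

Definition nsq n (z : 'cV[C]_n) : C := \sum_a `|z a 0| ^+ 2.

Lemma nsqE n (z : 'cV[C]_n) : (ctrmx z *m z) 0 0 = nsq z.
Proof.
rewrite mxE /nsq; apply: eq_bigr => a _.
by rewrite ctrmxE normCK mulrC.
Qed.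

Lemma nsq_ge0 n (z : 'cV[C]_n) : 0 <= nsq z.
Proof. by apply: sumr_ge0 => a _; rewrite exprn_ge0. Qed.

Lemma proj_props n r (Qp : 'M[C]_(n,r)) : ctrmx Qp *m Qp = 1%:M ->
  let V := 1%:M - Qp *m ctrmx Qp in
  [/\ ctrmx V = V, V *m V = V & V *m Qp = 0].
Proof.
move=> QQ V; split.
- by rewrite /V ctrmxB ctrmx1 ctrmx_mul ctrmxK.
- rewrite /V mulmxBl mul1mx mulmxBr mulmx1 -!mulmxA (mulmxA (ctrmx Qp)) QQ mul1mx.
  by rewrite subrr subr0.
- by rewrite /V mulmxBl mul1mx -mulmxA QQ mulmx1 subrr.
Qed.

Definition isproj n (V : 'M[C]_n) := ctrmx V = V /\ V *m V = V.

Lemma isprojC n (V : 'M[C]_n) : isproj V -> isproj (1%:M - V).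
Proof.
move=> [h1 h2]; split; first by rewrite ctrmxB ctrmx1 h1.
by rewrite mulmxBl mul1mx mulmxBr mulmx1 h2 subrr subr0.
Qed.

Lemma proj_sq n (V : 'M[C]_n) (z : 'cV[C]_n) : isproj V ->
  ctrmx (V *m z) *m (V *m z) = ctrmx z *m V *m z.
Proof. by move=> [h1 h2]; rewrite ctrmx_mul h1 -mulmxA (mulmxA V) h2 mulmxA. Qed.

Lemma proj_contr n (V : 'M[C]_n) (z : 'cV[C]_n) : isproj V ->
  nsq (V *m z) <= nsq z.
Proof.
move=> hV; rewrite -subr_ge0 -!nsqE; have hC := isprojC hV.
have := nsq_ge0 ((1%:M - V) *m z); rewrite -nsqE (proj_sq _ hC).
have -> : ctrmx z *m (1%:M - V) *m z = ctrmx z *m z - ctrmx (V *m z) *m (V *m z).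
  by rewrite proj_sq // mulmxBr mulmx1 mulmxBl.
by rewrite [X in 0 <= X -> _]mxE [X in _ + X]mxE.
Qed.

Lemma proj_diag n (V : 'M[C]_n) i : isproj V -> V i i = \sum_a `|V a i| ^+ 2.
Proof.
move=> [h1 h2]; rewrite -{1}h2 -{1}h1 mxE; apply: eq_bigr => a _.
by rewrite ctrmxE normCK mulrC.
Qed.

Lemma proj_diag_ge0 n (V : 'M[C]_n) i : isproj V -> 0 <= V i i.
Proof. by move=> hV; rewrite proj_diag //; apply: sumr_ge0 => a _; rewrite exprn_ge0. Qed.

Lemma nsq_delta n (i : 'I_n) : nsq (delta_mx i 0) = 1.
Proof.
rewrite /nsq (bigD1 i) //= big1 ?addr0 => [|a /negbTE ai]; rewrite mxE ?ai ?eqxx //=.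
  by rewrite normr1 expr1n.
by rewrite normr0 expr0n.
Qed.

Lemma proj_diag_le1 n (V : 'M[C]_n) i : isproj V -> V i i <= 1.
Proof.
move=> hV; have := proj_contr (delta_mx i 0) hV; rewrite nsq_delta.
rewrite -colE /nsq proj_diag //.
by under [X in X <= 1 -> _]eq_bigr do rewrite mxE.
Qed.
End Ctr.
Section CS.
Variable F : numFieldType.

Lemma sum_sq_eq0 (I : finType) (x : I -> F) : (forall i, 0 <= x i) ->
  \sum_i x i ^+ 2 <= 0 -> forall i, x i = 0.
Proof.
move=> hx hX i; apply/eqP; rewrite -(sqrf_eq0 (x i)) eq_le exprn_ge0 ?andbT //.
apply: le_trans hX; rewrite (bigD1 i) //= lerDl.
by apply: sumr_ge0 => j _; rewrite exprn_ge0.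
Qed.

Lemma cs_bound (I : finType) (x y : I -> F) (a b : F) :
  (forall i, 0 <= x i) -> (forall i, 0 <= y i) -> 0 <= a -> 0 <= b ->
  \sum_i x i ^+ 2 <= a ^+ 2 -> \sum_i y i ^+ 2 <= b ^+ 2 ->
  \sum_i x i * y i <= a * b.
Proof.
move=> hx hy ha hb hX hY.
have [a0|a0] := eqVneq a 0.
  have x0 : forall i, x i = 0 by apply: sum_sq_eq0 hx _; move: hX; rewrite a0 expr0n.
  by rewrite big1 ?a0 ?mul0r // => i _; rewrite x0 mul0r.
have [b0|b0] := eqVneq b 0.
  have y0 : forall i, y i = 0 by apply: sum_sq_eq0 hy _; move: hY; rewrite b0 expr0n.
  by rewrite big1 ?b0 ?mulr0 // => i _; rewrite y0 mulr0.
have apos : 0 < a by rewrite lt_def a0.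
have bpos : 0 < b by rewrite lt_def b0.
have key : forall i, (x i * y i) * (a * b) *+ 2 <= b ^+ 2 * x i ^+ 2 + a ^+ 2 * y i ^+ 2.
  move=> i; have := Order.le_of_leif (real_leif_mean_square_scaled (x := b * x i) (y := a * y i)
     (ger0_real (mulr_ge0 hb (hx i))) (ger0_real (mulr_ge0 ha (hy i)))).
  have -> : x i * y i * (a * b) = b * x i * (a * y i) by ring.
  by rewrite !exprMn.
have : \sum_i x i * y i * (a * b) *+ 2 <= \sum_i (b ^+ 2 * x i ^+ 2 + a ^+ 2 * y i ^+ 2).
  by apply: ler_sum => i _; apply: key.
rewrite sumrMnl -mulr_suml big_split /= -!mulr_sumr.
have h2 : b ^+ 2 * \sum_i x i ^+ 2 + a ^+ 2 * \sum_i y i ^+ 2 <= (a * b) * (a * b) *+ 2.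
  have -> : (a * b) * (a * b) *+ 2 = b ^+ 2 * a ^+ 2 + a ^+ 2 * b ^+ 2 by ring.
  by apply: lerD; apply: ler_wpM2l => //; rewrite exprn_ge0.
move=> h; have := le_trans h h2.
by rewrite ler_pMn2r // ler_pM2r ?mulr_gt0.
Qed.
End CS.
Section Pinv.
Variable R : realType.
Local Notation C := R[i].

Lemma nsq_eq0 n (z : 'cV[C]_n) : nsq z = 0 -> z = 0.
Proof.
move=> h; apply/matrixP=> a b; rewrite ord1 mxE.
have := psumr_eq0P (P := predT) (F := fun a => `|z a 0| ^+ 2) (fun i _ => exprn_ge0 2 (normr_ge0 _)) h (i := a) isT.
by move/eqP; rewrite sqrf_eq0 normr_eq0 => /eqP.
Qed.

Lemma ctrmx_inv n (M : 'M[C]_n) : ctrmx (invmx M) = invmx (ctrmx M).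
Proof. by rewrite /ctrmx map_invmx trmx_inv. Qed.

Lemma rowfree_unit k l (X : 'M[C]_(k, l)) : row_free X -> X *m ctrmx X \in unitmx.
Proof.
move=> hX; rewrite -row_free_unit; apply: inj_row_free => v hv.
have h1 : nsq (ctrmx (v *m X)) = 0.
  by rewrite -nsqE ctrmxK ctrmx_mul mulmxA -(mulmxA v) hv mul0mx mxE.
have h2 : v *m X = 0 by rewrite -(ctrmxK (v *m X)) (nsq_eq0 h1) ctrmx0.
by apply: (row_free_inj hX); rewrite h2 mul0mx.
Qed.

Lemma pinv_right k l (X : 'M[C]_(k, l)) : \rank X = k -> X *m pinv X = 1%:M.
Proof.
move=> hr; have hX : row_free X by rewrite /row_free hr.
have hU := rowfree_unit hX.
set M := X *m ctrmx X in hU.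
have hM : ctrmx M = M by rewrite /M ctrmx_mul ctrmxK.
have ex : exists Y, penrose X Y.
  exists (ctrmx X *m invmx M); rewrite /penrose; split.
  - by rewrite (mulmxA X) mulmxV // mul1mx.
  - by rewrite -mulmxA (mulmxA X) mulmxV // mulmx1.
  - by rewrite mulmxA mulmxV // ctrmx1.
  - by rewrite !ctrmx_mul ctrmx_inv hM ctrmxK mulmxA.
have [h1 _ _ _] : penrose X (pinv X) by apply: (xgetPex 0 ex).
apply/eqP; rewrite -subr_eq0; apply/eqP; apply: (row_free_inj hX).
by rewrite mulmxBl mul1mx h1 subrr mul0mx.
Qed.
End Pinv.
Section Spec.
Variable R : realType.
Local Notation C := R[i].

Lemma Re_le (x y : C) : x <= y -> complex.Re x <= complex.Re y.
Proof. rewrite lecE. case/andP => _ h. exact h. Qed.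

Lemma ge0_RC (x : C) : 0 <= x -> x = real_complex R (complex.Re x).
Proof. by move=> h; rewrite RRe_real // ger0_real. Qed.

Lemma vnorm2E n (v : 'cV[C]_n) : vnorm2 v = Num.sqrt (complex.Re (nsq v)).
Proof. by []. Qed.

Lemma unit_nsq n (v : 'cV[C]_n) : vnorm2 v = 1 -> nsq v = 1.
Proof.
rewrite vnorm2E => h.
have h0 : 0 <= complex.Re (nsq v) by exact: (Re_le (nsq_ge0 v)).
have : Num.sqrt (complex.Re (nsq v)) ^+ 2 = 1 by rewrite h expr1n.
by rewrite sqr_sqrtr // => e; rewrite (ge0_RC (nsq_ge0 v)) e.
Qed.

Lemma entry_le1 n (v : 'cV[C]_n) i : nsq v = 1 -> `|v i 0| <= 1.
Proof.
move=> h; have : `|v i 0| ^+ 2 <= 1.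
  rewrite -h /nsq (bigD1 i) //= lerDl; apply: sumr_ge0 => a _; exact: exprn_ge0.
by move=> h2; rewrite -(@ler_pXn2r _ 2) ?nnegrE // expr1n.
Qed.

Lemma specnorm_facts m' k' (S : 'M[C]_(m', k')) :
  has_ubound [set vnorm2 (S *m v) | v in [set v : 'cV[C]_k' | vnorm2 v = 1]].
Proof.
set B := \sum_a (\sum_i `|S a i|) ^+ 2.
exists (Num.sqrt (complex.Re B)) => _ [v hv <-].
rewrite vnorm2E ler_sqrt; last by have := Re_le (x := 0) (y := B); apply; apply: sumr_ge0 => a _; apply: exprn_ge0; apply: sumr_ge0.
apply: Re_le; rewrite /nsq /B; apply: ler_sum => a _.
rewrite ler_pXn2r // ?nnegrE ?sumr_ge0 //.
rewrite mxE; apply: le_trans (ler_norm_sum _ _ _) _; apply: ler_sum => i _.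
rewrite normrM; rewrite -{2}(mulr1 `|S a i|); apply: ler_wpM2l => //.
exact: entry_le1 (unit_nsq hv).
Qed.
End Spec.
Section Spec2.
Variable R : realType.
Local Notation C := R[i].
Local Notation rc := (real_complex R).

Lemma vnorm2_unit n (v : 'cV[C]_n) : nsq v = 1 -> vnorm2 v = 1.
Proof. by move=> h; rewrite vnorm2E h /= sqrtr1. Qed.

Lemma spec_row m' k' (S : 'M[C]_(m', k')) (j : 'I_m') : (0 < k')%N ->
  0 <= specnorm S /\ \sum_i `|S j i| ^+ 2 <= rc (specnorm S ^+ 2).
Proof.
move=> hk.
have hub := specnorm_facts S.
have sup_ge : forall v, vnorm2 v = 1 -> vnorm2 (S *m v) <= specnorm S.
  by move=> v hv; apply: (ub_le_sup hub); exists v.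
have s0 : 0 <= specnorm S.
  have := sup_ge (delta_mx (Ordinal hk) 0) (vnorm2_unit (nsq_delta _ (Ordinal hk))).
  by apply: le_trans; rewrite vnorm2E sqrtr_ge0.
split => //.
set r := \sum_i `|S j i| ^+ 2.
have hr0 : 0 <= r by apply: sumr_ge0 => i _; apply: exprn_ge0.
have [->|rn0] := eqVneq r 0; first by rewrite ler0c sqr_ge0.
set rho := Num.sqrt (complex.Re r).
have hRe : 0 <= complex.Re r by exact: (Re_le hr0).
have rhoE : r = rc rho ^+ 2 by rewrite -rmorphXn /= sqr_sqrtr // -ge0_RC.
have rho0 : rc rho != 0 by apply: contraNneq rn0; rewrite rhoE => ->; rewrite expr0n.
have rhoge0 : 0 <= rc rho by rewrite ler0c sqrtr_ge0.
set v := \col_i ((S j i)^* / rc rho).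
have nv : nsq v = 1.
  rewrite /nsq.
  under eq_bigr do rewrite mxE normrM normfV norm_conjC (ger0_norm rhoge0) exprMn.
  by rewrite -mulr_suml -/r rhoE exprVn mulfV // expf_neq0.
have Sv : (S *m v) j 0 = rc rho.
  rewrite mxE.
  under eq_bigr do rewrite mxE mulrA -normCK.
  by rewrite -mulr_suml -/r rhoE expr2 mulfK.
have := sup_ge v (vnorm2_unit nv).
have h1 : rc rho ^+ 2 <= nsq (S *m v).
  by rewrite /nsq (bigD1 j) //= Sv (ger0_norm rhoge0) lerDl; apply: sumr_ge0 => a _; apply: exprn_ge0.
have h2 : rho <= vnorm2 (S *m v).
  have -> : rho = Num.sqrt (rho ^+ 2) by rewrite sqrtr_sqr ger0_norm // sqrtr_ge0.
  rewrite vnorm2E ler_sqrt; last first.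
    by exact: (Re_le (nsq_ge0 _)).
  by have := Re_le h1; rewrite -rmorphXn.
move=> h3; rewrite rhoE -rmorphXn lecR ler_pXn2r // ?nnegrE ?sqrtr_ge0 //.
exact: le_trans h2 h3.
Qed.
End Spec2.
Section Core.
Variable R : realType.
Local Notation C := R[i].
Local Notation rc := (real_complex R).

Lemma rc_ge0 (x : R) : 0 <= x -> 0 <= rc x.
Proof. by rewrite ler0c. Qed.

Lemma rc_gt0 (x : R) : 0 < x -> 0 < rc x.
Proof. by rewrite ltcR. Qed.

Lemma norm_rc (x : R) : `|rc x| = rc `|x|.
Proof.
have [h|h] := leP 0 x; first by rewrite !ger0_norm ?ler0c.
by rewrite !ltr0_norm ?ltcR // rmorphN.
Qed.

Lemma rcM (x y : R) : rc (x * y) = rc x * rc y.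
Proof. by rewrite rmorphM. Qed.
Lemma rcD (x y : R) : rc (x + y) = rc x + rc y.
Proof. by rewrite rmorphD. Qed.
Lemma rcV (x : R) : rc (x^-1) = (rc x)^-1.
Proof. by rewrite fmorphV. Qed.
Lemma rcX (x : R) n : rc (x ^+ n) = rc x ^+ n.
Proof. by rewrite rmorphXn. Qed.
Lemma rc_sum (I : finType) (F : I -> R) : rc (\sum_i F i) = \sum_i rc (F i).
Proof. by rewrite rmorph_sum. Qed.
Lemma rc1 : rc 1 = 1.
Proof. by []. Qed.

Lemma test_ring (a b c d : C) : a * (b * c) / d = c * (b / d * a).
Proof. ring. Qed.

Lemma sum_sub_col k m (V : 'M[C]_(k + m)) b : isproj V ->
  \sum_(i < k) `|V (lshift m i) b| ^+ 2 <= 1.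
Proof.
move=> hV; apply: le_trans (proj_diag_le1 b hV); rewrite proj_diag // big_split_ord /= lerDl.
by apply: sumr_ge0 => a _; apply: exprn_ge0.
Qed.
End Core.
Section Cheb.
Variable R : realType.

Lemma chebSS n (x : R) : cheb n.+2 x = 2 * x * cheb n.+1 x - cheb n x.
Proof. by []. Qed.

Lemma cheb_inv n (x : R) :
  (cheb n x - x * cheb n.+1 x) ^+ 2 = (1 - x ^+ 2) * (1 - cheb n.+1 x ^+ 2).
Proof.
elim: n => [|n IH]; first by rewrite /=; ring.
rewrite chebSS.
have e : forall a b : R, (b - x * (2 * x * b - a)) ^+ 2 - (1 - x ^+ 2) * (1 - (2 * x * b - a) ^+ 2)
   = (a - x * b) ^+ 2 - (1 - x ^+ 2) * (1 - b ^+ 2) by move=> a b; ring.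
apply/eqP; rewrite -subr_eq0 e IH subrr //.
Qed.

Lemma cheb_le1 n (x : R) : -1 <= x <= 1 -> cheb n x ^+ 2 <= 1.
Proof.
move=> /andP [h1 h2].
have [hx|hx] := ltP (x ^+ 2) 1.
  case: n => [|n]; first by rewrite /= expr1n.
  have := cheb_inv n x; set a := cheb n.+1 x => e.
  have h0 : 0 <= (1 - x ^+ 2) * (1 - a ^+ 2) by rewrite -e sqr_ge0.
  have hp : 0 < 1 - x ^+ 2 by rewrite subr_gt0.
  by move: h0; rewrite pmulr_rge0 // subr_ge0.
have x2' : x ^+ 2 <= 1 by rewrite expr2; nra.
have x2 : x ^+ 2 = 1 by apply/eqP; rewrite eq_le hx x2'.
suff : forall n0, cheb n0 x ^+ 2 = 1 by move=> ->.
elim=> [|n0 IH]; first by rewrite /= expr1n.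
have := cheb_inv n0 x; rewrite x2 subrr mul0r => /eqP; rewrite sqrf_eq0 subr_eq0 => /eqP e.
have : cheb n0 x ^+ 2 = x ^+ 2 * cheb n0.+1 x ^+ 2 by rewrite e exprMn.
by rewrite IH x2 mul1r => <-.
Qed.

Lemma cheb_mono (y0 x : R) : 1 <= y0 -> y0 <= x -> forall n,
  [/\ cheb n y0 <= cheb n x, 1 <= cheb n y0, cheb n.+1 y0 - cheb n y0 <= cheb n.+1 x - cheb n x
      & 0 <= cheb n.+1 y0 - cheb n y0].
Proof.
move=> h1 h2; elim=> [|n [IH1 IH2 IH3 IH4]]; first by split; rewrite /= ?lexx //; lra.
split.
- lra.
- lra.
- rewrite !chebSS.
  have : (2 * y0 - 2) * cheb n.+1 y0 <= (2 * x - 2) * cheb n.+1 x.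
    apply: ler_pM; lra.
  lra.
- rewrite chebSS. have : 0 <= (2 * y0 - 2) * cheb n.+1 y0 by apply: mulr_ge0; lra.
  lra.
Qed.

Fixpoint spoly (y : {poly R}) (n : nat) : {poly R} :=
  match n with
  | 0 => 1
  | 1 => y
  | (p.+1 as p1).+1 => y *+ 2 * spoly y p1 - spoly y p
  end.

Lemma spolySS (y : {poly R}) n : spoly y n.+2 = y *+ 2 * spoly y n.+1 - spoly y n.
Proof. by []. Qed.

Lemma spolyE (y : {poly R}) n x : (spoly y n).[x] = cheb n y.[x].
Proof.
have : (spoly y n).[x] = cheb n y.[x] /\ (spoly y n.+1).[x] = cheb n.+1 y.[x].
  elim: n => [|n [IH1 IH2]]; first by rewrite /= hornerC.
  split => //.
  by rewrite spolySS chebSS -IH1 -IH2 hornerD hornerN !hornerM hornerMn mulr_natl.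
by case.
Qed.

Lemma size_spoly (y : {poly R}) n : (size y <= 2)%N -> (size (spoly y n) <= n.+1)%N.
Proof.
move=> hy.
have : (size (spoly y n) <= n.+1)%N /\ (size (spoly y n.+1) <= n.+2)%N.
  elim: n => [|n [IH1 IH2]]; first by rewrite /= size_polyC; case: eqP.
  split => //.
  rewrite spolySS.
  apply: leq_trans (size_polyD _ _) _; rewrite geq_max; apply/andP; split.
    have h2 : (size (y *+ 2) <= size y)%N.
      by rewrite mulr2n; apply: leq_trans (size_polyD _ _) _; rewrite geq_max leqnn.
    have h4 := size_polyMleq (y *+ 2) (spoly y n.+1).
    rewrite -!subn1 in h4; lia.
  by rewrite size_polyN; apply: leq_trans IH1 _; apply: leqW; apply: leqW.
by case.
Qed.
End Cheb.
Section Core1.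
Variable R : realType.
Local Notation C := R[i].
Local Notation rc := (real_complex R).

Lemma core1 k m (V : 'M[C]_(k + m)) (S : 'M[C]_(m, k)) (lamL pL : 'I_k -> R)
  (lamR dR : 'I_m -> R) (s c : R) :
  isproj V ->
  (forall i a, V a (lshift m i) * rc (lamL i * pL i) =
      - \sum_j V a (rshift k j) * (rc (dR j) * S j i)) ->
  (forall i, 0 < lamL i) -> (forall i, c <= pL i) -> 0 < c ->
  (forall j, `|dR j| <= lamR j) -> 0 <= s ->
  (forall j, \sum_i `|S j i| ^+ 2 <= rc (s ^+ 2)) ->
  \sum_i rc (lamL i) * V (lshift m i) (lshift m i) <= rc (c^-1 * s * \sum_j lamR j).
Proof.
move=> hV KR hlL hpL hc hdR hs hS.
have pL0 : forall i, 0 < pL i by move=> i; apply: lt_le_trans (hpL i).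
have e1 : forall i, rc (lamL i) * V (lshift m i) (lshift m i) =
   - \sum_j rc (dR j) * (S j i / rc (pL i) * V (lshift m i) (rshift k j)).
  move=> i; have pn : rc (pL i) != 0 by rewrite gt_eqF // rc_gt0.
  apply: (mulIf pn).
  transitivity (V (lshift m i) (lshift m i) * rc (lamL i * pL i)); first by rewrite rmorphM; ring.
  rewrite KR mulNr mulr_suml.
  congr (- _); apply: eq_bigr => j _; field => //.
have E0 : 0 <= \sum_i rc (lamL i) * V (lshift m i) (lshift m i).
  by apply: sumr_ge0 => i _; apply: mulr_ge0; [apply: rc_ge0; apply: ltW|apply: proj_diag_ge0].
rewrite -(ger0_norm E0).
under eq_bigr do rewrite e1.
rewrite sumrN exchange_big /= normrN.
apply: le_trans (ler_norm_sum _ _ _) _.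
rewrite rcM rc_sum mulr_sumr; apply: ler_sum => j _.
rewrite -mulr_sumr normrM norm_rc mulrC; apply: ler_pM.
- by [].
- by rewrite rc_ge0.
- apply: le_trans (ler_norm_sum _ _ _) _.
  have -> : rc (c^-1 * s) = rc (c^-1 * s) * 1 by rewrite mulr1.
  have hn : forall i, `|S j i / rc (pL i) * V (lshift m i) (rshift k j)| =
      (`|S j i| / rc (pL i)) * `|V (lshift m i) (rshift k j)|.
    by move=> i; rewrite !normrM normfV (ger0_norm (ltW (rc_gt0 (pL0 i)))).
  under eq_bigr do rewrite hn.
  apply: cs_bound.
  + by move=> i; rewrite divr_ge0 // rc_ge0 // ltW.
  + by move=> i.
  + by rewrite rc_ge0 // mulr_ge0 // invr_ge0 ltW.
  + by [].
  + rewrite rcM rcV exprMn.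
    have h1 : forall i, (`|S j i| / rc (pL i)) ^+ 2 <= `|S j i| ^+ 2 * (rc c)^-1 ^+ 2.
      move=> i; rewrite exprMn; apply: ler_wpM2l; first by apply: exprn_ge0.
      rewrite ler_pXn2r ?nnegrE ?invr_ge0 ?rc_ge0 ?(ltW (pL0 i)) ?(ltW hc) //.
      by rewrite lef_pV2 ?posrE ?rc_gt0 ?lecR.
    apply: le_trans (ler_sum _ (fun i _ => h1 i)) _.
    rewrite -mulr_suml mulrC; apply: ler_wpM2l; first by rewrite exprn_ge0 // invr_ge0 rc_ge0 // ltW.
    by rewrite -rcX; apply: hS.
  + by rewrite expr1n; apply: sum_sub_col.
- by rewrite lecR.
Qed.
End Core1.
Section Core2.
Variable R : realType.
Local Notation C := R[i].
Local Notation rc := (real_complex R).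

Lemma core2 k m (V : 'M[C]_(k + m)) (S : 'M[C]_(m, k)) (lamL pL : 'I_k -> R)
  (lamR dR : 'I_m -> R) (s c lk mu : R) :
  isproj V ->
  (forall i a, V a (lshift m i) * rc (lamL i * pL i) =
      - \sum_j V a (rshift k j) * (rc (dR j) * S j i)) ->
  (forall i, lk <= lamL i) -> 0 < lk -> (forall i, c <= pL i) -> 0 < c ->
  (forall j, 0 <= lamR j <= mu) ->
  (forall j, `|dR j| <= lamR j) -> 0 <= s ->
  (forall j, \sum_i `|S j i| ^+ 2 <= rc (s ^+ 2)) ->
  \sum_i rc (lamL i) * V (lshift m i) (lshift m i) <=
     rc (mu / lk * c ^- 2 * s ^+ 2 * \sum_j lamR j).
Proof.
move=> hV KR hlL hlk hpL hc hlR hdR hs hS.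
have pL0 : forall i, 0 < pL i by move=> i; apply: lt_le_trans (hpL i).
have lL0 : forall i, 0 < lamL i by move=> i; apply: lt_le_trans (hlL i).
set T := fun i => \sum_j rc (lamR j) ^+ 2 * `|S j i| ^+ 2.
have per : forall i, rc (lamL i) * V (lshift m i) (lshift m i) <= T i / (rc lk * rc c ^+ 2).
  move=> i.
  set z : 'cV[C]_(k + m) := col_mx 0 (\col_j (rc (dR j) * S j i)).
  have Vz : forall a, (V *m z) a 0 = \sum_j V a (rshift k j) * (rc (dR j) * S j i).
    move=> a; rewrite mxE big_split_ord /= big1 ?add0r => [|i' _].
      by apply: eq_bigr => j _; rewrite col_mxEd mxE.
    by rewrite col_mxEu mxE mulr0.
  have dn : rc (lamL i * pL i) != 0 by rewrite gt_eqF // rc_gt0 // mulr_gt0.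
  have colV : forall a, V a (lshift m i) = - (V *m z) a 0 / rc (lamL i * pL i).
    by move=> a; rewrite Vz -KR mulfK.
  have hd : 0 < rc (lamL i * pL i) by rewrite rc_gt0 // mulr_gt0.
  have e2 : V (lshift m i) (lshift m i) = nsq (V *m z) / rc (lamL i * pL i) ^+ 2.
    rewrite proj_diag // /nsq mulr_suml; apply: eq_bigr => a _.
    by rewrite colV normrM normfV normrN (ger0_norm (ltW hd)) exprMn exprVn.
  have hz : nsq z <= T i.
    rewrite /nsq big_split_ord /= big1 ?add0r => [|i' _]; last first.
      by rewrite col_mxEu mxE normr0 expr0n.
    apply: ler_sum => j _; rewrite col_mxEd mxE normrM exprMn norm_rc.
    apply: ler_wpM2r; first by apply: exprn_ge0.
    rewrite ler_pXn2r ?nnegrE ?rc_ge0 //; first by rewrite lecR.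
    by case/andP: (hlR j).
  rewrite e2 mulrA.
  apply: (@le_trans _ _ (rc (lamL i) * T i / rc (lamL i * pL i) ^+ 2)).
    apply: ler_wpM2r; first by rewrite invr_ge0 exprn_ge0 // ltW.
    apply: ler_wpM2l; first by rewrite rc_ge0 // ltW.
    exact: le_trans (proj_contr z hV) hz.
  have T0 : 0 <= T i by apply: sumr_ge0 => j _; apply: mulr_ge0; apply: exprn_ge0 => //; rewrite rc_ge0 //; case/andP: (hlR j).
  have -> : rc (lamL i) * T i / rc (lamL i * pL i) ^+ 2 = T i / (rc (lamL i) * rc (pL i) ^+ 2).
    have l0 : rc (lamL i) != 0 by rewrite gt_eqF // rc_gt0.
    have p0 : rc (pL i) != 0 by rewrite gt_eqF // rc_gt0.
    by rewrite rcM; field; rewrite l0 p0.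
  apply: ler_wpM2l => //.
  rewrite lef_pV2 ?posrE ?mulr_gt0 ?exprn_gt0 ?rc_gt0 //.
  rewrite -!rcX -!rcM lecR; apply: ler_pM.
  - exact: ltW hlk.
  - exact: exprn_ge0 (ltW hc).
  - exact: hlL.
  - by rewrite ler_pXn2r ?nnegrE ?(ltW hc) ?(ltW (pL0 i)).
apply: le_trans (ler_sum _ (fun i _ => per i)) _.
rewrite -mulr_suml /T exchange_big /=.
have h1 : \sum_j \sum_i rc (lamR j) ^+ 2 * `|S j i| ^+ 2 <= rc (mu * s ^+ 2 * \sum_j lamR j).
  rewrite mulr_sumr rc_sum; apply: ler_sum => j _.
  rewrite -mulr_sumr; apply: (@le_trans _ _ (rc (lamR j) ^+ 2 * rc (s ^+ 2))).
    by apply: ler_wpM2l; [apply: exprn_ge0; rewrite rc_ge0 //; case/andP: (hlR j)|apply: hS].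
  rewrite -rcX -rcM lecR; case/andP: (hlR j) => l0 l1.
  have h2 : 0 <= s ^+ 2 by apply: sqr_ge0.
  have h3 : 0 <= mu - lamR j by rewrite subr_ge0.
  have := mulr_ge0 (mulr_ge0 h2 l0) h3.
  have -> : mu * s ^+ 2 * lamR j = lamR j ^+ 2 * s ^+ 2 + s ^+ 2 * lamR j * (mu - lamR j) by ring.
  by rewrite lerDl.
apply: le_trans (ler_wpM2r _ h1) _; first by rewrite invr_ge0 mulr_ge0 ?exprn_ge0 ?rc_ge0 ?ltW.
rewrite -rcX -rcM -rcV -rcM lecR le_eqVlt; apply/orP; left; apply/eqP.
by field; rewrite !gt_eqF.
Qed.
End Core2.
Unset Implicit Arguments.
Local Notation rc R := (real_complex R).

Theorem theorem5 (R : realType) (k m l q : nat)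
  (A U : 'M[R[i]]_(k + m)) (lam : nat -> R)
  (Om : 'M[R[i]]_(k + m, l))
  (Q : 'M[R[i]]_(k + m, \sum_(j < q) l)) (Rq : 'M[R[i]]_(\sum_(j < q) l)) :
  hermitian_psd A ->
  ctrmx U *m U = 1%:M ->
  A = U *m rdiag (k + m) lam *m ctrmx U ->
  (forall i j : nat, (1 <= i)%N -> (i <= j)%N -> (j <= k + m)%N -> lam j <= lam i) ->
  (0 < k)%N -> (0 < m)%N ->
  lam k > lam k.+1 -> lam k.+1 > 0 ->
  (1 <= q)%N -> (k <= l)%N -> (l <= k + m)%N ->
  let U1 := lsubmx U in
  let U2 := rsubmx U in
  let Om1 := ctrmx U1 *m Om in
  let Om2 := ctrmx U2 *m Om in
  let Kq := krylov q A Om in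
  \rank Om1 = k ->
  \rank Kq = (q * l)%N ->
  Kq = Q *m Rq -> ctrmx Q *m Q = 1%:M -> upper_trig Rq ->
  let T := ctrmx Q *m A *m Q in
  let s := specnorm (Om2 *m pinv Om1) in
  let c := cheb q.-1 ((2 * lam k - lam k.+1) / lam k.+1) in
  let trL2 := \sum_(k.+1 <= i < (k + m).+1) lam i in
  (0 <= \tr A - \tr T /\
   \tr A - \tr T <= real_complex R ((1 + c^-1 * s) * trL2)) /\
  (0 < s -> s <= lam k / lam k.+1 * c ->
   0 <= \tr A - \tr T /\
   \tr A - \tr T <= real_complex R ((1 + lam k.+1 / lam k * c ^- 2 * s ^+ 2) * trL2)).
Proof.
move=> hpsd hU hA hmono hk hm hlk hl1 hq hkl hln U1 U2 Om1 Om2 Kq hrk hrK hKQ hQ hup T s c trL2.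
have hUU : U *m ctrmx U = 1%:M by apply: mulmx1C.
set Lam := rdiag (k + m) lam.
have LamE : forall p (X : 'M[R[i]]_(k + m, p)) a b, (Lam *m X) a b = rc R (lam a.+1) * X a b.
  move=> p X a b; rewrite mxE (bigD1 a) //= big1 ?addr0 => [|a' /negbTE ha].
    by rewrite /Lam /rdiag mxE eqxx mul1r.
  by rewrite /Lam /rdiag mxE eq_sym ha mul0r mul0r.
have hUA : ctrmx U *m A = Lam *m ctrmx U.
  by rewrite hA !mulmxA hU mul1mx.
set W := ctrmx U *m Om.
have hpow : forall j a b, (ctrmx U *m (A ^+ j *m Om)) a b = rc R (lam a.+1) ^+ j * W a b.
  elim=> [|j IH] a b; first by rewrite expr0 mul1mx expr0 mul1r.
  rewrite exprS -mulmxE -mulmxA mulmxA hUA -mulmxA LamE.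
  have -> : (ctrmx U *m (A ^+ j *m Om)) = \matrix_(a, b) (rc R (lam a.+1) ^+ j * W a b).
    by apply/matrixP=> a' b'; rewrite IH mxE.
  by rewrite mxE exprS mulrA.
set Qp := ctrmx U *m Q.
have hQp : ctrmx Qp *m Qp = 1%:M.
  by rewrite /Qp ctrmx_mul ctrmxK -mulmxA (mulmxA U) hUU mul1mx.
set V := 1%:M - Qp *m ctrmx Qp.
have [hV1 hV2 hV3] := proj_props hQp.
have hV : isproj V by [].
have err : \tr A - \tr T = \sum_(a < k + m) rc R (lam a.+1) * V a a.
  have trA : \tr A = \tr Lam by rewrite hA mxtrace_mulC mulmxA hU mul1mx.
  have trT : \tr T = \tr (Lam *m (Qp *m ctrmx Qp)).
    rewrite /T hA /Qp ctrmx_mul ctrmxK.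
    transitivity (\tr (U *m Lam *m ctrmx U *m Q *m ctrmx Q)).
      rewrite [LHS]mxtrace_mulC -!mulmxA [in LHS](mulmxA Q) [LHS]mxtrace_mulC.
      by rewrite !mulmxA.
    by rewrite !mulmxA [RHS]mxtrace_mulC !mulmxA.
  rewrite trA trT -linearB /= -{1}(mulmx1 Lam) -mulmxBr /mxtrace.
  by apply: eq_bigr => a _; rewrite LamE.
have lam0 : forall a : 'I_(k + m), 0 <= lam a.+1.
  move=> a; have := (proj2 hpsd) (U *m delta_mx a 0).
  rewrite ctrmx_mul -(mulmxA _ (ctrmx U) A) hUA !mulmxA -(mulmxA _ (ctrmx U) U) hU mulmx1 -mulmxA.
  rewrite mxE (bigD1 a) //= big1 ?addr0 => [|b /negbTE hb]; last first.
    by rewrite ctrmxE mxE hb conjC0 mul0r.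
  by rewrite ctrmxE mxE eqxx conjC1 mul1r LamE mxE eqxx mulr1 ler0c.
have Om1E : forall i b, Om1 i b = W (lshift m i) b.
  by move=> i b; rewrite !mxE; apply: eq_bigr => a _; rewrite !ctrmxE !mxE.
have Om2E : forall j b, Om2 j b = W (rshift k j) b.
  by move=> j b; rewrite !mxE; apply: eq_bigr => a _; rewrite !ctrmxE !mxE.
set P := pinv Om1.
have hP : Om1 *m P = 1%:M by apply: pinv_right.
set S := Om2 *m P.
set mu := lam k.+1.
set yp : {poly R} := (2 / mu) *: 'X - 1.
have ypE : forall x, yp.[x] = 2 / mu * x - 1.
  by move=> x; rewrite /yp !hornerE.
have ysz : (size yp <= 2)%N.
  rewrite /yp; apply: leq_trans (size_polyD _ _) _; rewrite geq_max size_polyN size_poly1 andbT.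
  by apply: leq_trans (size_scale_leq _ _) _; rewrite size_polyX.
set pp := spoly yp q.-1.
have ppE : forall x, pp.[x] = cheb q.-1 (2 / mu * x - 1).
  by move=> x; rewrite /pp spolyE ypE.
have ppsz : (size pp <= q)%N.
  by have := size_spoly q.-1 ysz; rewrite prednK.
pose dd := fun a : 'I_(k + m) => lam a.+1 * pp.[lam a.+1].
set Cm := \mxcol_(j < q) (rc R (pp`_j) *: (1%:M : 'M[R[i]]_l)).
have KC : forall a b, (ctrmx U *m (Kq *m Cm)) a b = rc R (dd a) * W a b.
  move=> a b; rewrite /Kq /krylov mul_mxrow_mxcol mulmx_sumr summxE /dd.
  rewrite (horner_coef_wide _ ppsz) mulr_sumr rc_sum mulr_suml; apply: eq_bigr => j _.
  rewrite -!scalemxAr mulmx1 mxE hpow.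
  by rewrite !rcM rcX exprS; ring.
have VY : V *m (ctrmx U *m (Kq *m Cm) *m P) = 0.
  rewrite hKQ.
  have -> : ctrmx U *m (Q *m Rq *m Cm) *m P = Qp *m (Rq *m Cm *m P) by rewrite /Qp !mulmxA.
  have hV3p : V *m Qp = 0 := hV3.
  by rewrite (mulmxA V Qp) hV3p mul0mx.
have Y0E : forall b i, (ctrmx U *m (Kq *m Cm) *m P) b i = rc R (dd b) * (W *m P) b i.
  by move=> b i; rewrite mxE [in RHS]mxE mulr_sumr; apply: eq_bigr => c' _; rewrite KC mulrA.
have WP1 : forall i' i, (W *m P) (lshift m i') i = (i' == i)%:R.
  move=> i' i; have := congr1 (fun M : 'M[R[i]]_k => M i' i) hP; rewrite /= [in RHS]mxE => <-.
  by rewrite !mxE; apply: eq_bigr => c' _; rewrite Om1E.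
have WP2 : forall j i, (W *m P) (rshift k j) i = S j i.
  by move=> j i; rewrite /S !mxE; apply: eq_bigr => c' _; rewrite Om2E.
have KR : forall i a, V a (lshift m i) * rc R (dd (lshift m i)) =
    - \sum_j V a (rshift k j) * (rc R (dd (rshift k j)) * S j i).
  move=> i a; set Y0 := (ctrmx U *m (Kq *m Cm) *m P) in VY Y0E *.
  have h0 := congr1 (fun M : 'M[R[i]]_(k + m, k) => M a i) VY.
  rewrite /= mxE [RHS]mxE big_split_ord /= in h0.
  have e1 : \sum_(i0 < k) V a (lshift m i0) * Y0 (lshift m i0) i = V a (lshift m i) * rc R (dd (lshift m i)).
    rewrite (bigD1 i) //= big1 ?addr0 => [|i' /negbTE hi].
      by rewrite Y0E WP1 eqxx mulr1.
    by rewrite Y0E WP1 hi mulr0 mulr0.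
  have e2 : \sum_(i0 < m) V a (rshift k i0) * Y0 (rshift k i0) i = \sum_j V a (rshift k j) * (rc R (dd (rshift k j)) * S j i).
    by apply: eq_bigr => j _; rewrite Y0E WP2.
  by move: h0; rewrite e1 e2 => /eqP; rewrite addr_eq0 => /eqP.
have hlk0 : 0 < lam k by apply: lt_trans hlk.
have hlL : forall i : 'I_k, lam k <= lam (lshift m i).+1.
  move=> i; apply: hmono; [by [] | by have := ltn_ord i | exact: leq_addr].
have hlR : forall j : 'I_m, 0 <= lam (rshift k j).+1 <= mu.
  move=> j; rewrite lam0 /=; apply: hmono => //; [by rewrite ltnS leq_addr | by rewrite ltn_add2l].
set y0 := (2 * lam k - lam k.+1) / lam k.+1.
have y0E : y0 = 2 / mu * lam k - 1 by rewrite /y0 /mu; field; rewrite gt_eqF.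
have hy0 : 1 <= y0.
  rewrite y0E; have : 2 / mu * lam k = 2 * (lam k / mu) by rewrite mulrAC mulrA.
  move=> ->; have : 1 < lam k / mu by rewrite ltr_pdivlMr // mul1r.
  lra.
have hpL : forall i : 'I_k, c <= pp.[lam (lshift m i).+1].
  move=> i; rewrite ppE.
  have hx : y0 <= 2 / mu * lam (lshift m i).+1 - 1.
    by rewrite y0E lerD2r; apply: ler_wpM2l; [rewrite divr_ge0 // ltW | exact: hlL].
  by have [h _ _ _] := cheb_mono hy0 hx q.-1.
have hc : 0 < c.
  have [_ h _ _] := cheb_mono hy0 (lexx y0) q.-1.
  by apply: lt_le_trans h.
have hdR : forall j : 'I_m, `|dd (rshift k j)| <= lam (rshift k j).+1.
  move=> j; case/andP: (hlR j) => l0 l1.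
  rewrite /dd normrM (ger0_norm l0); apply: (@le_trans _ _ (lam (rshift k j).+1 * 1)); last by rewrite mulr1.
  apply: ler_wpM2l => //.
  rewrite ppE; set x := 2 / mu * _ - 1.
  have hx : -1 <= x <= 1.
    have : 0 <= 2 / mu * lam (rshift k j).+1 <= 2.
      rewrite mulr_ge0 ?divr_ge0 //=; last exact: ltW.
      by rewrite mulrAC ler_pdivrMr // ler_pM2l.
    rewrite /x; case/andP => h1 h2; apply/andP; split; lra.
  have := cheb_le1 q.-1 hx; rewrite -real_normK ?num_real //.
  by move=> h2; rewrite -(@ler_pXn2r _ 2) ?nnegrE // expr1n.
have srow : forall j : 'I_m, 0 <= s /\ \sum_i `|S j i| ^+ 2 <= rc R (s ^+ 2).
  by move=> j; apply: spec_row.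
have hs : 0 <= s.
  have j0 : 'I_m by exists 0%N.
  by case: (srow j0).
have trE : trL2 = \sum_(j < m) lam (rshift k j).+1.
  rewrite /trL2 -{1}[k.+1]add0n big_addn subSS addKn big_mkord; apply: eq_bigr => j _.
  by rewrite /= addnS addnC.
rewrite err big_split_ord /=.
set E1 := \sum_(i < k) _.
set E2 := \sum_(i < m) _.
have E1ge0 : 0 <= E1.
  apply: sumr_ge0 => i _; apply: mulr_ge0; [by rewrite ler0c; exact: (lam0 (lshift m i)) | exact: proj_diag_ge0].
have E2ge0 : 0 <= E2.
  apply: sumr_ge0 => i _; apply: mulr_ge0; [by rewrite ler0c; exact: (lam0 (rshift k i)) | exact: proj_diag_ge0].
have E2le : E2 <= rc R trL2.
  rewrite trE rc_sum; apply: ler_sum => j _; rewrite -{2}(mulr1 (rc R _)).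
  by apply: ler_wpM2l; [rewrite ler0c; exact: (lam0 (rshift k j)) | exact: proj_diag_le1].
have hKR : forall (i : 'I_k) (a : 'I_(k + m)), V a (lshift m i) * rc R (lam (lshift m i).+1 * pp.[lam (lshift m i).+1]) =
    - \sum_j V a (rshift k j) * (rc R (dd (rshift k j)) * S j i) := KR.
have B1 := core1 hV hKR (fun i => lt_le_trans hlk0 (hlL i)) hpL hc hdR hs (fun j => proj2 (srow j)).
split.
  split; first by apply: addr_ge0.
  rewrite mulrDl mul1r rcD addrC trE; apply: lerD => //; by rewrite -trE.
move=> _ _; split; first by apply: addr_ge0.
have B2 := core2 hV hKR hlL hlk0 hpL hc hlR hdR hs (fun j => proj2 (srow j)).
by rewrite mulrDl mul1r rcD addrC trE; apply: lerD => //; rewrite -trE.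
Qed.
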